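(* Let $\langle S,L,\tau,\ell\rangle$ be a labelled Markov chain and let $R$ be a bisimulation with $\simeq\,\subseteq R\subseteq\,\sim$. Then $\mathrm{Refine}(R)$ is a bisimulation with $\simeq\,\subseteq\mathrm{Refine}(R)\subseteq\,\sim$.
   Context: Labelled Markov chain $\langle S,L,\tau,\ell\rangle$: finite $S$, finite $L$, $\tau:S\to\mathcal{D}(S)$, $\ell:S\to L$, $|\ell(S)|\ge2$. $\Omega(\mu,\nu)$ = couplings (distributions on $S\times S$ with marginals $\mu,\nu$). A bisimulation is an equivalence relation $R\subseteq S\times S$ such that for all $(s,t)\in R$, $\ell(s)=\ell(t)$ and some $\omega\in\Omega(\tau(s),\tau(t))$ has $\mathrm{support}(\omega)\subseteq R$; $\sim$ is bisimilarity. $S^2_\Delta=\{(s,s)\}$, $S^2_1=\{(s,t)\mid\ell(s)\ne\ell(t)\}$. A policy is $P:S\times S\to\mathcal{D}(S\times S)$ with $P(s,t)\in\Omega(\tau(s),\tau(t))$ for $(s,t)\notin S^2_1$ and $P(s,t)$ the point mass at $(s,t)$ for $(s,t)\in S^2_1$; $\mathcal{P}$ = set of policies, inducing Markov chains $\langle S\times S,P\rangle$. Robust bisimilarity: $s\simeq t$ iff some $P\in\mathcal{P}$ makes $(s,t)$ reach $S^2_\Delta$ with probability $1$. $R$ supports a path $(u_1,v_1)\dots(u_n,v_n)$ if $(u_i,v_i)\in R$ and $\mathrm{support}(P(u_i,v_i))\subseteq R$ for all $i$. $\mathrm{Filter}(R)=\{(s,t)\in R\mid\exists P\in\mathcal{P}$: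 $R$ supports a path from $(s,t)$ to $S^2_\Delta\}$; $\mathrm{Prune}(R)=\{(s,t)\in R\mid\forall u:((t,u)\in R\Rightarrow(s,u)\in R)\wedge((u,s)\in R\Rightarrow(u,t)\in R)\}$; $\mathrm{Bisim}(R)$ = largest bisimulation contained in $R$; $\mathrm{Refine}(R)=\mathrm{Bisim}(\mathrm{Prune}(\mathrm{Filter}(R)))$. *)

(* Defs.v *)
From mathcomp Require Import all_boot all_order all_algebra.
From mathcomp Require Import reals.
Set Implicit Arguments. Unset Strict Implicit. Unset Printing Implicit Defensive.
Import Order.TTheory GRing.Theory Num.Theory.
Local Open Scope ring_scope.

Notation relS S := (S -> S -> Prop).

Section LMC.
Variable (R : realType) (S : finType) (L : Type).
Variables (tau : S -> S -> R) (ell : S -> L).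

Local Notation relS := (S -> S -> Prop).

Definition is_distr (T : finType) (mu : T -> R) : Prop :=
  (forall x, 0 <= mu x) /\ \sum_(x : T) mu x = 1.

Definition is_LMC : Prop := forall s, is_distr (tau s).

Definition coupling (mu nu : S -> R) (om : S * S -> R) : Prop :=
  is_distr om /\
  (forall u, \sum_(v : S) om (u, v) = mu u) /\
  (forall v, \sum_(u : S) om (u, v) = nu v).

Definition support_in (om : S * S -> R) (Q : relS) : Prop :=
  forall u v, om (u, v) != 0 -> Q u v.

Definition equivalence (Q : relS) : Prop :=
  (forall s, Q s s) /\ (forall s t, Q s t -> Q t s) /\
  (forall s t u, Q s t -> Q t u -> Q s u).

Definition rel_incl (Q1 Q2 : relS) : Prop := forall s t, Q1 s t -> Q2 s t.

Definition bisimulation (Q : relS) : Prop :=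
  equivalence Q /\
  forall s t, Q s t -> ell s = ell t /\
    exists om, coupling (tau s) (tau t) om /\ support_in om Q.

Definition bisimilar : relS := fun s t => exists Q, bisimulation Q /\ Q s t.

Definition diag (x : S * S) : Prop := x.1 = x.2.
Definition S21 (x : S * S) : Prop := ell x.1 <> ell x.2.

Definition point_mass (x : S * S) : S * S -> R :=
  fun y => if y == x then 1 else 0.

Definition policy (P : S * S -> S * S -> R) : Prop :=
  forall x : S * S,
    (~ S21 x -> coupling (tau x.1) (tau x.2) (P x)) /\
    (S21 x -> P x = point_mass x).

Fixpoint reach_within (P : S * S -> S * S -> R) (n : nat) (x : S * S) : R :=
  match n with
  | 0 => if x.1 == x.2 then 1 else 0
  | n'.+1 => if x.1 == x.2 then 1
             else \sum_(y : S * S) P x y * reach_within P n' y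
  end.

(* probability of (eventually) reaching the diagonal equals 1, i.e. the
   supremum over n of the (nondecreasing) bounded-step probabilities is 1 *)
Definition reaches_diag_as (P : S * S -> S * S -> R) (x : S * S) : Prop :=
  forall eps : R, 0 < eps -> exists n, 1 - eps < reach_within P n x.

Definition robust : relS := fun s t =>
  exists P, policy P /\ reaches_diag_as P (s, t).

Inductive supported_reach (Q : relS) (P : S * S -> S * S -> R) : S * S -> Prop :=
  | sr_base x : diag x -> Q x.1 x.2 -> support_in (P x) Q ->
      supported_reach Q P x
  | sr_step x y : Q x.1 x.2 -> support_in (P x) Q -> 0 < P x y ->
      supported_reach Q P y -> supported_reach Q P x.

Definition Filter (Q : relS) : relS := fun s t =>
  Q s t /\ exists P, policy P /\ supported_reach Q P (s, t).

Definition Prune (Q : relS) : relS := fun s t =>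
  Q s t /\ forall u, (Q t u -> Q s u) /\ (Q u s -> Q u t).

Definition Bisim (Q : relS) : relS := fun s t =>
  exists B, bisimulation B /\ rel_incl B Q /\ B s t.

Definition Refine (Q : relS) : relS := Bisim (Prune (Filter Q)).

End LMC.

(* Main.v *)
Require Import Defs.
From mathcomp Require Import all_boot all_order all_algebra.
From mathcomp Require Import reals.
From mathcomp Require Import lra.
From Stdlib Require Import Classical ClassicalEpsilon Relation_Operators.
Set Implicit Arguments. Unset Strict Implicit. Unset Printing Implicit Defensive.
Import Order.TTheory GRing.Theory Num.Theory.
Local Open Scope ring_scope.

Section Coup.
Variables (R : realType) (S : finType).

Lemma sum_pair (f : S * S -> R) : \sum_(p : S * S) f p = \sum_(i : S) \sum_(j : S) f (i, j).
Proof. by rewrite pair_big; apply: eq_bigr => -[]. Qed.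

Lemma coupling_ge0 (mu nu : S -> R) om : coupling mu nu om -> forall x, 0 <= om x.
Proof. by case=> -[]. Qed.

Lemma coupling_mk (mu nu : S -> R) om : is_distr mu -> (forall x, 0 <= om x) ->
  (forall u, \sum_(v : S) om (u, v) = mu u) ->
  (forall v, \sum_(u : S) om (u, v) = nu v) -> coupling mu nu om.
Proof.
move=> [_ hmu] h0 h1 h2; split; [split=> // | by split].
by rewrite sum_pair -hmu; apply: eq_bigr => u _; rewrite h1.
Qed.

Lemma distr_coupling1 (mu nu : S -> R) om : coupling mu nu om -> is_distr mu.
Proof.
move=> [[h0 h1] [hm1 hm2]]; split.
  by move=> u; rewrite -hm1; apply: sumr_ge0 => v _.
by rewrite -h1 sum_pair; apply: eq_bigr => u _; rewrite hm1.
Qed.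

Lemma coupling_T (mu nu : S -> R) om : coupling mu nu om ->
  coupling nu mu (fun x => om (x.2, x.1)).
Proof.
move=> c; have [[h0 h1] [hm1 hm2]] := c.
apply: coupling_mk => //.
- split; first by move=> u; rewrite -hm2; apply: sumr_ge0.
  by rewrite -h1 sum_pair exchange_big; apply: eq_bigr => v _; rewrite hm2.
Qed.

Definition dcoup (mu : S -> R) (x : S * S) : R := if x.1 == x.2 then mu x.1 else 0.

Lemma sum_eq1 (u : S) (g : S -> R) : \sum_(v : S) (if u == v then g v else 0) = g u.
Proof.
rewrite (bigD1 u) //= eqxx big1 ?addr0 // => v /negbTE.
by rewrite eq_sym => ->.
Qed.

Lemma sum_eq2 (u : S) (g : S -> R) : \sum_(v : S) (if v == u then g v else 0) = g u.
Proof.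
by rewrite (bigD1 u) //= eqxx big1 ?addr0 // => v /negbTE ->.
Qed.

Lemma dcoup_coupling (mu : S -> R) : is_distr mu -> coupling mu mu (dcoup mu).
Proof.
move=> hd; have [h0 _] := hd; apply: coupling_mk => //.
- by move=> x; rewrite /dcoup; case: ifP.
- by move=> u; rewrite /dcoup /= sum_eq1.
- move=> v; rewrite /dcoup /=.
  by rewrite -(sum_eq2 v mu).
Qed.

Lemma dcoup_supp (mu : S -> R) (Q : relS S) : (forall s, Q s s) -> support_in (dcoup mu) Q.
Proof. move=> hQ u v; rewrite /dcoup /=; have [->|ne] := eqVneq u v; [by move=> _; apply: hQ | by rewrite eqxx]. Qed.

Definition pcoup (mu nu : S -> R) (x : S * S) : R := mu x.1 * nu x.2.

Lemma pcoup_coupling (mu nu : S -> R) : is_distr mu -> is_distr nu -> coupling mu nu (pcoup mu nu).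
Proof.
move=> [m0 m1] [n0 n1]; apply: coupling_mk => //.
- by move=> x; rewrite /pcoup mulr_ge0.
- by move=> u; rewrite /pcoup /= -mulr_sumr n1 mulr1.
- by move=> v; rewrite /pcoup /= -mulr_suml m1 mul1r.
Qed.

Definition glue (nu : S -> R) (om1 om2 : S * S -> R) (x : S * S) : R :=
  \sum_(b : S) om1 (x.1, b) * om2 (b, x.2) / nu b.

Section Glue.
Variables (mu nu rho : S -> R) (om1 om2 : S * S -> R).
Hypotheses (c1 : coupling mu nu om1) (c2 : coupling nu rho om2).

Lemma nu_ge0 b : 0 <= nu b.
Proof. by have [[h0 _] [_ h2]] := c1; rewrite -h2; apply: sumr_ge0. Qed.

Lemma om1_zero a b : nu b = 0 -> om1 (a, b) = 0.
Proof.
have [[h0 _] [_ h2]] := c1; move=> hb.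
by apply: (psumr_eq0P (P := predT) (F := fun a => om1 (a, b))) => // ; rewrite h2.
Qed.

Lemma om2_zero b c : nu b = 0 -> om2 (b, c) = 0.
Proof.
have [[h0 _] [h1 _]] := c2; move=> hb.
by apply: (psumr_eq0P (P := predT) (F := fun c => om2 (b, c))) => // ; rewrite h1.
Qed.

Lemma glue_coupling : coupling mu rho (glue nu om1 om2).
Proof.
have [[a0 _] [a1 a2]] := c1; have [[b0 _] [b1 b2]] := c2.
apply: coupling_mk.
- exact: distr_coupling1 c1.
- move=> x; apply: sumr_ge0 => b _; rewrite mulr_ge0 ?invr_ge0 ?nu_ge0 //.
  by rewrite mulr_ge0.
- move=> u; rewrite /glue /=; rewrite exchange_big /= -a1; apply: eq_bigr => b _.
  rewrite (eq_bigr (fun c => om1 (u, b) / nu b * om2 (b, c))); last first.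
    by move=> c _; rewrite mulrAC.
  rewrite -mulr_sumr b1; have [hb|hb] := eqVneq (nu b) 0.
    by rewrite om1_zero // mul0r mul0r.
  by rewrite divfK.
- move=> v; rewrite /glue /=; rewrite exchange_big /= -b2; apply: eq_bigr => b _.
  rewrite (eq_bigr (fun a => om2 (b, v) / nu b * om1 (a, b))); last first.
    by move=> a _; rewrite -mulrA mulrC.
  rewrite -mulr_sumr a2; have [hb|hb] := eqVneq (nu b) 0.
    by rewrite om2_zero // mul0r mul0r.
  by rewrite divfK.
Qed.

Lemma glue_supp (Q1 Q2 Q3 : relS S) : support_in om1 Q1 -> support_in om2 Q2 ->
  (forall a b c, Q1 a b -> Q2 b c -> Q3 a c) -> support_in (glue nu om1 om2) Q3.
Proof.
move=> s1 s2 tr a c; rewrite /glue /= => hn.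
have [b hb] : exists b, om1 (a, b) * om2 (b, c) / nu b != 0.
  apply/existsP; apply: contraNT hn; rewrite negb_exists => /forallP h.
  by apply/eqP; apply: big1 => b _; apply/eqP; have := h b; rewrite negbK.
apply: (tr _ b); [apply: s1 | apply: s2]; apply: contraNneq hb => e; by rewrite e ?(mul0r, mulr0).
Qed.

Lemma glue_pos a b c : 0 < om1 (a, b) -> 0 < om2 (b, c) -> 0 < glue nu om1 om2 (a, c).
Proof.
have [[a0 _] [a1 a2]] := c1; have [[b0 _] [b1 b2]] := c2.
move=> p1 p2; rewrite /glue /= (bigD1 b) //=.
have nb : 0 < nu b.
  rewrite -a2 (bigD1 a) //=; apply: (lt_le_trans p1); rewrite lerDl.
  by apply: sumr_ge0.
apply: (lt_le_trans (y := om1 (a, b) * om2 (b, c) / nu b)) => //=.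
  by rewrite divr_gt0 // mulr_gt0.
rewrite lerDl; apply: sumr_ge0 => i _; rewrite mulr_ge0 ?invr_ge0 ?nu_ge0 //.
by rewrite mulr_ge0.
Qed.
End Glue.
End Coup.

Lemma minimal_nat (P : nat -> Prop) n : P n -> exists m, P m /\ forall k, P k -> (m <= k)%N.
Proof.
elim/ltn_ind: n => n IH Pn.
case: (classic (exists k, (k < n)%N /\ P k)) => [[k [lt Pk]]|no].
  exact: IH lt Pk.
exists n; split=> // k Pk; rewrite leqNgt; apply/negP => lt; apply: no; eauto.
Qed.

Lemma support_mono (S : finType) (R : realType) (om : S * S -> R) (Q1 Q2 : relS S) :
  support_in om Q1 -> (forall a b, Q1 a b -> Q2 a b) -> support_in om Q2.
Proof. by move=> h m a b /h; apply: m. Qed.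

Section Main.
Variables (R : realType) (S : finType) (L : Type) (tau : S -> S -> R) (ell : S -> L).
Hypothesis hLMC : is_LMC tau.

Lemma policy_distr P : policy tau ell P -> forall x, is_distr (P x).
Proof.
move=> hP x; have [h1 h2] := hP x.
case: (classic (S21 ell x)) => hs.
  rewrite h2 //; split; first by move=> y; rewrite /point_mass; case: ifP.
  by rewrite /point_mass sum_eq2.
by have [] := h1 hs.
Qed.

Lemma reach_bounds P : policy tau ell P -> forall n x, 0 <= reach_within P n x <= 1.
Proof.
move=> hP; elim=> [|n IH] x /=; first by case: ifP => _; rewrite ?lexx ?ler01.
case: ifP => _; first by rewrite lexx ler01.
have [d0 d1] := policy_distr hP x.
apply/andP; split.
  by apply: sumr_ge0 => y _; rewrite mulr_ge0 //; case/andP: (IH y).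
rewrite -d1; apply: ler_sum => y _; apply: ler_piMr => //; by case/andP: (IH y).
Qed.

Lemma reach_S21 P x : policy tau ell P -> S21 ell x -> forall n, reach_within P n x = 0.
Proof.
move=> hP hs; have ne : x.1 != x.2 by apply/eqP => e; apply: hs; rewrite e.
have hpx := (hP x).2 hs.
elim=> [|n IH] /=; first by rewrite (negbTE ne).
rewrite (negbTE ne) hpx (bigD1 x) //= /point_mass eqxx mul1r IH add0r.
by apply: big1 => y /negbTE ->; rewrite mul0r.
Qed.

Lemma reachP_lab P x : policy tau ell P -> reaches_diag_as P x -> ell x.1 = ell x.2.
Proof.
move=> hP h; apply: NNPP => hs.
have [n hn] := h 1 ltr01.
by move: hn; rewrite (reach_S21 hP hs) subrr ltxx.
Qed.

Lemma reachP_succ P x y : policy tau ell P -> reaches_diag_as P x -> x.1 != x.2 ->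
  0 < P x y -> reaches_diag_as P y.
Proof.
move=> hP h ne py.
have [d0 d1] := policy_distr hP x.
have hrest : \sum_(z | z != y) P x z = 1 - P x y.
  by have := d1; rewrite (bigD1 y) //= => e; rewrite -e addrAC subrr add0r.
have p1 : P x y <= 1.
  rewrite -d1 (bigD1 y) //= lerDl; exact: sumr_ge0.
suff main : forall e, 0 < e < 1 -> exists n, 1 - e < reach_within P n y.
  move=> e he; case: (ltP e 1) => e1; first by apply: main; rewrite he e1.
  have [n hn] := main (2^-1) (ltac:(apply/andP; split; lra)).
  by exists n; lra.
move=> e /andP [e0 e1].
have [[|n] hn] := h (e * P x y) (mulr_gt0 e0 py).
  move: hn => /=; rewrite (negbTE ne) => hn.
  have : e * P x y < 1 by nra.
  lra.
exists n; move: hn => /=; rewrite (negbTE ne) (bigD1 y) //=.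
have : \sum_(z | z != y) P x z * reach_within P n z <= 1 - P x y.
  rewrite -hrest; apply: ler_sum => z _; apply: ler_piMr => //.
  by case/andP: (reach_bounds hP n z).
move=> hle hlt.
have : 1 - e * P x y < P x y * reach_within P n y + (1 - P x y) by lra.
move=> h2; nra.
Qed.

Lemma reachP_refl (P : S * S -> S * S -> R) (u : S) : reaches_diag_as P (u, u).
Proof. by move=> e e0; exists 0%N => /=; rewrite eqxx; lra. Qed.

Lemma robust_coupling s t : robust tau ell s t ->
  exists om, coupling (tau s) (tau t) om /\ support_in om (robust tau ell).
Proof.
move=> [P [hP hr]].
have [->|ne] := eqVneq s t.
  exists (dcoup (tau t)); split; first exact: dcoup_coupling.
  by apply: dcoup_supp => u; exists P; split => //; apply: reachP_refl.
have nS : ~ S21 ell (s, t) by move=> h; apply: h; exact: (reachP_lab hP hr).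
exists (P (s, t)); split; first exact: ((hP (s, t)).1 nS).
move=> u v hn; exists P; split => //.
apply: (reachP_succ hP hr) => //.
rewrite lt0r hn /=; by have [d0 _] := policy_distr hP (s, t).
Qed.

Variable Q : relS S.
Hypothesis hQ : bisimulation tau ell Q.
Hypothesis hrQ : rel_incl (robust tau ell) Q.

Lemma Qrefl s : Q s s. Proof. by case: hQ => -[]. Qed.
Lemma Qsym s t : Q s t -> Q t s. Proof. by case: hQ => -[_ [h _]] _; apply: h. Qed.
Lemma Qtrans s t u : Q s t -> Q t u -> Q s u. Proof. by case: hQ => -[_ [_ h]] _; apply: h. Qed.
Lemma Qlab s t : Q s t -> ell s = ell t. Proof. by case: hQ => _ h /h []. Qed.

Fixpoint Fn (n : nat) (x : S * S) : Prop :=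
  match n with
  | 0 => x.1 = x.2 /\ Q x.1 x.2
  | n'.+1 => Fn n' x \/ (Q x.1 x.2 /\ exists om y, coupling (tau x.1) (tau x.2) om /\
       support_in om Q /\ 0 < om y /\ Fn n' y)
  end.

Definition F x := exists n, Fn n x.

Lemma Fn_mono n m x : (n <= m)%N -> Fn n x -> Fn m x.
Proof.
move=> /subnK <-; elim: (m - n)%N => [|k IH] // h /=; by left; apply: IH.
Qed.

Lemma Fn_Q n x : Fn n x -> Q x.1 x.2.
Proof. by elim: n x => [|n IH] x /= => [[]|[/IH|[]]]. Qed.

Lemma F_Q x : F x -> Q x.1 x.2.
Proof. by case=> n /Fn_Q. Qed.

Lemma F_base x : x.1 = x.2 -> F x.
Proof. by move=> e; exists 0%N; split => //; rewrite e; apply: Qrefl. Qed.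

Lemma F_step x om y : Q x.1 x.2 -> coupling (tau x.1) (tau x.2) om -> support_in om Q ->
  0 < om y -> F y -> F x.
Proof. move=> q c s p [n hn]; exists n.+1; right; split => //; by exists om, y. Qed.

Lemma sr_F P x : policy tau ell P -> supported_reach Q P x -> F x.
Proof.
move=> hP; elim => {x} [x d q _|x y q s p _ IH]; first exact: F_base.
have nS : ~ S21 ell x by move=> h; apply: h; exact: Qlab.
exact: (F_step q ((hP x).1 nS) s p IH).
Qed.

Definition spec (x : S * S) (om : S * S -> R) : Prop :=
  coupling (tau x.1) (tau x.2) om /\
  (F x -> support_in om Q /\ exists y, 0 < om y /\ forall n, Fn n.+1 x -> Fn n y).

Lemma spec_ex x : x.1 != x.2 -> exists om, spec x om.
Proof.
move=> ne; case: (classic (F x)) => [[n hn]|nF].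
  have [m [hm mmin]] := @minimal_nat (fun k => Fn k x) n hn.
  case: m hm mmin => [[e _]|k hk kmin]; first by rewrite e eqxx in ne.
  case: hk => [hk|[q [om [y [c [s [p hy]]]]]]].
    by have := kmin _ hk; rewrite ltnn.
  exists om; split => // _; split => //; exists y; split => // n' hn'.
  by apply: Fn_mono hy; have := kmin _ hn'.
exists (pcoup (tau x.1) (tau x.2)); split; last by [].
exact: pcoup_coupling.
Qed.

Definition Pol (x : S * S) : S * S -> R :=
  if excluded_middle_informative (S21 ell x) then point_mass R x
  else if x.1 == x.2 then dcoup (tau x.1)
  else epsilon (inhabits (fun _ => 0)) (spec x).

Lemma Pol_diag x : x.1 = x.2 -> Pol x = dcoup (tau x.1).
Proof.
move=> e; rewrite /Pol; destruct (excluded_middle_informative (S21 ell x)) as [h|h0].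
  by exfalso; apply: h; rewrite e.
by rewrite e eqxx.
Qed.

Lemma Pol_nd x : ~ S21 ell x -> x.1 != x.2 -> spec x (Pol x).
Proof.
move=> nS ne; rewrite /Pol; destruct (excluded_middle_informative (S21 ell x)) as [h|h0] => //.
rewrite (negbTE ne); apply: epsilon_spec; exact: spec_ex.
Qed.

Lemma Pol_policy : policy tau ell Pol.
Proof.
move=> x; split.
  move=> nS; have [e|ne] := eqVneq x.1 x.2.
    rewrite Pol_diag // -e; apply: dcoup_coupling; exact: hLMC.
  by case: (Pol_nd nS ne).
by move=> h; rewrite /Pol; destruct (excluded_middle_informative (S21 ell x)).
Qed.

Lemma Fn_sr n x : Fn n x -> supported_reach Q Pol x.
Proof.
elim: n x => [|n IH] x.
  move=> [e q]; apply: sr_base => //; rewrite Pol_diag //; apply: dcoup_supp; exact: Qrefl.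
move=> hx; have q := Fn_Q hx.
have [e|ne] := eqVneq x.1 x.2.
  apply: sr_base => //; rewrite Pol_diag //; apply: dcoup_supp; exact: Qrefl.
have nS : ~ S21 ell x by move=> h; apply: h; exact: Qlab.
have [_ h] := Pol_nd nS ne.
have [s [y [p hy]]] := h (ex_intro _ n.+1 hx).
exact: (sr_step q s p (IH _ (hy _ hx))).
Qed.

Lemma F_Filter s t : F (s, t) -> Filter tau ell Q s t.
Proof.
move=> [n hn]; split; first exact: (Fn_Q hn).
exists Pol; split; [exact: Pol_policy | exact: Fn_sr hn].
Qed.

Lemma Filter_F s t : Filter tau ell Q s t -> F (s, t).
Proof. by move=> [_ [P [hP h]]]; exact: sr_F hP h. Qed.

Lemma Fn_sym n x : Fn n x -> Fn n (x.2, x.1).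
Proof.
elim: n x => [|n IH] x /=.
  by move=> [e q]; split; [rewrite e | apply: Qsym].
move=> [h|[q [om [y [c [s [p hy]]]]]]]; first by left; apply: IH.
right; split; first exact: Qsym.
exists (fun z => om (z.2, z.1)), (y.2, y.1); split; first exact: coupling_T.
split; first by move=> u v /s; apply: Qsym.
by case: y p hy => a b p hy; split => //; apply: IH hy.
Qed.

Lemma robust_F s t : robust tau ell s t -> F (s, t).
Proof.
move=> [P [hP hr]].
suff main : forall n x, reaches_diag_as P x -> 0 < reach_within P n x -> F x.
  have [n hn] := hr 1 ltr01; apply: (main n) => //; lra.
elim=> [|n IH] x hx /=.
  by case: eqP => [e _|_]; [exact: F_base | rewrite ltxx].
have [e|ne] := eqVneq x.1 x.2; first by move=> _; exact: F_base.
move=> hpos.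
have [d0 _] := policy_distr hP x.
have rb z := reach_bounds hP n z.
have [y /andP [_ hy]] : exists y, true && (0 < P x y * reach_within P n y).
  apply: psumr_neq0P; last by move=> h; rewrite h ltxx in hpos.
  by move=> z _; rewrite mulr_ge0 //; case/andP: (rb z).
have py : 0 < P x y.
  rewrite lt0r d0 andbT; apply/eqP => h; by rewrite h mul0r ltxx in hy.
have ry : 0 < reach_within P n y by move: hy; rewrite pmulr_rgt0.
have hry := reachP_succ hP hx ne py.
have nS : ~ S21 ell x by move=> h; apply: h; exact: (reachP_lab hP hx).
apply: (F_step (om := P x) (y := y)) => //.
- by apply: hrQ; exists P; split => //; rewrite -surjective_pairing.
- exact: ((hP x).1 nS).
- move=> u v hn; apply: hrQ; exists P; split => //; apply: (reachP_succ hP hx ne).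
  by rewrite lt0r hn d0.
- exact: IH hry ry.
Qed.


Lemma lemma1 n s t u : robust tau ell s t -> Fn n (t, u) -> F (s, u).
Proof.
elim: n s t u => [|n IH] s t u hst /=.
  by move=> [/= e _]; rewrite -e; exact: robust_F.
move=> [h|[/= q [om2 [[t1 u1] [c2 [s2 [p2 hy]]]]]]]; first exact: IH hst h.
have [om1 [c1 s1]] := robust_coupling hst.
have tt1 : 0 < tau t t1.
  have [[b0 _] [b1 _]] := c2.
  rewrite -b1 (bigD1 u1) //=; apply: (lt_le_trans p2); rewrite lerDl.
  by apply: sumr_ge0.
have [a /andP [_ pa]] : exists a, true && (0 < om1 (a, t1)).
  have [[a0 _] [_ a2]] := c1.
  apply: psumr_neq0P => //; rewrite a2; by apply/eqP; rewrite gt_eqF.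
have ra : robust tau ell a t1 by apply: s1; rewrite gt_eqF.
apply: (F_step (om := glue (tau t) om1 om2) (y := (a, u1))) => /=.
- apply: (Qtrans (hrQ hst) q).
- exact: glue_coupling c1 c2.
- apply: glue_supp s1 s2 _ => // x y z r1 q2; exact: Qtrans (hrQ r1) q2.
- exact: (glue_pos c1 c2 pa p2).
- exact: (IH a t1 u1 ra hy).
Qed.

Lemma lemma2 n s t u : robust tau ell s t -> Fn n (u, s) -> F (u, t).
Proof.
elim: n s t u => [|n IH] s t u hst /=.
  by move=> [/= e _]; rewrite e; exact: robust_F.
move=> [h|[/= q [om2 [[u1 s1] [c2 [s2 [p2 hy]]]]]]]; first exact: IH hst h.
have [om1 [c1 sp1]] := robust_coupling hst.
have ss1 : 0 < tau s s1.
  have [[b0 _] [_ b2]] := c2.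
  rewrite -b2 (bigD1 u1) //=; apply: (lt_le_trans p2); rewrite lerDl.
  by apply: sumr_ge0.
have [a /andP [_ pa]] : exists a, true && (0 < om1 (s1, a)).
  have [[a0 _] [a1 _]] := c1.
  apply: psumr_neq0P => //; rewrite a1; by apply/eqP; rewrite gt_eqF.
have ra : robust tau ell s1 a by apply: sp1; rewrite gt_eqF.
apply: (F_step (om := glue (tau s) om2 om1) (y := (u1, a))) => /=.
- apply: (Qtrans q (hrQ hst)).
- exact: glue_coupling c2 c1.
- apply: glue_supp s2 sp1 _ => // x y z q2 r1; exact: Qtrans q2 (hrQ r1).
- exact: (glue_pos c2 c1 p2 pa).
- exact: (IH s1 a u1 ra hy).
Qed.


Lemma ct_sym (B0 : relS S) : (forall a b, B0 a b -> B0 b a) ->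
  forall a b, clos_trans S B0 a b -> clos_trans S B0 b a.
Proof.
move=> hs a b; elim => {a b} [a b /hs h|a b c _ h1 _ h2]; first exact: t_step.
exact: t_trans h2 h1.
Qed.

Lemma ct_bisim (B0 : relS S) : (forall s, B0 s s) -> (forall a b, B0 a b -> B0 b a) ->
  (forall a b, B0 a b -> ell a = ell b /\
     exists om, coupling (tau a) (tau b) om /\ support_in om B0) ->
  bisimulation tau ell (clos_trans S B0).
Proof.
move=> hr hs hc; split.
  split; first by move=> s; apply: t_step.
  split; first exact: ct_sym.
  by move=> a b c; apply: t_trans.
move=> a b; elim => {a b} [a b /hc [e [om [c sp]]]|a b c _ [e1 [om1 [c1 s1]]] _ [e2 [om2 [c2 s2]]]].
  split => //; exists om; split => //; apply: support_mono sp _ => u v; exact: t_step.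
split; first by rewrite e1 e2.
exists (glue (tau b) om1 om2); split; first exact: glue_coupling c1 c2.
apply: glue_supp s1 s2 _ => x y z; exact: t_trans.
Qed.

Definition Xr : relS S := Prune (Filter tau ell Q).

Lemma ct_incl (B0 : relS S) : (forall a b, B0 a b -> Xr a b) ->
  forall a b, clos_trans S B0 a b -> Xr a b.
Proof.
move=> hi a b; elim => {a b} [a b /hi //|a b c _ [h1 h1'] _ [h2 h2']].
split.
  by apply: (h1' c).1.
move=> u; split.
  by move=> h; apply: (h1' u).1; apply: (h2' u).1.
by move=> h; apply: (h2' u).2; apply: (h1' u).2.
Qed.

Lemma Filter_sym a b : Filter tau ell Q a b -> Filter tau ell Q b a.
Proof. by move=> /Filter_F [n hn]; apply: F_Filter; exists n; exact: (Fn_sym hn). Qed.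

Lemma Xr_sym a b : Xr a b -> Xr b a.
Proof.
move=> [h1 h2]; split; first exact: Filter_sym.
move=> u; split => h.
  apply: Filter_sym; apply: (h2 u).2; exact: Filter_sym.
apply: Filter_sym; apply: (h2 u).1; exact: Filter_sym.
Qed.

Lemma Xr_refl s : Xr s s.
Proof. by split => //; apply: F_Filter; apply: F_base. Qed.

Lemma robust_Xr s t : robust tau ell s t -> Xr s t.
Proof.
move=> hst; split; first by apply: F_Filter; exact: robust_F.
move=> u; split.
  by move=> /Filter_F [n hn]; apply: F_Filter; exact: lemma1 hst hn.
by move=> /Filter_F [n hn]; apply: F_Filter; exact: lemma2 hst hn.
Qed.

Lemma eq_bisim : bisimulation tau ell (fun a b => a = b).
Proof.
split; first by split => //; split => // a b c -> ->.
move=> s t <-; split => //; exists (dcoup (tau s)); split.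
  exact: dcoup_coupling.
exact: dcoup_supp.
Qed.

Lemma part1 : bisimulation tau ell (Refine tau ell Q).
Proof.
rewrite /Refine -/Xr; split.
  split; first by move=> s; exists (fun a b => a = b); split; [exact: eq_bisim|split=> // a b ->; exact: Xr_refl].
  split.
    move=> s t [B [hB [hi hb]]]; exists B; split => //; split => //.
    by case: hB => -[_ [hs _]] _; apply: hs.
  move=> s t w [B1 [hB1 [hi1 h1]]] [B2 [hB2 [hi2 h2]]].
  exists (clos_trans S (fun a b => B1 a b \/ B2 a b)); split; last split.
  - apply: ct_bisim.
    + by move=> a; left; case: hB1 => -[].
    + move=> a b [h|h]; [left; case: hB1 => -[_ [hs _]] _ | right; case: hB2 => -[_ [hs _]] _]; exact: hs.
    + move=> a b [h|h].
        case: hB1 => _ /(_ a b h) [e [om [c sp]]]; split => //; exists om; split => //.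
        by apply: support_mono sp _ => u v; left.
      case: hB2 => _ /(_ a b h) [e [om [c sp]]]; split => //; exists om; split => //.
      by apply: support_mono sp _ => u v; right.
  - by apply: ct_incl => a b [/hi1|/hi2].
  - by apply: t_trans (t_step _ _ _ _ _) (t_step _ _ _ _ _); [left; exact: h1 | right; exact: h2].
move=> s t [B [hB [hi hb]]].
have [_ hc] := hB; have [e [om [c sp]]] := hc s t hb; split => //; exists om; split => //.
by apply: support_mono sp _ => u v h; exists B; split => //; split.
Qed.

Lemma robust_refl (s : S) : robust tau ell s s.
Proof. by exists Pol; split; [exact: Pol_policy | exact: reachP_refl]. Qed.

Lemma part2 : rel_incl (robust tau ell) (Refine tau ell Q).
Proof.
move=> s t hst.
exists (clos_trans S (fun a b => robust tau ell a b \/ robust tau ell b a)); split; last split.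
- apply: ct_bisim.
  + by move=> a; left; apply: robust_refl.
  + by move=> a b [h|h]; [right|left].
  + move=> a b [h|h].
      have [P [hP hr]] := h; split; first exact: (reachP_lab hP hr).
      have [om [c sp]] := robust_coupling h; exists om; split => //.
      by apply: support_mono sp _ => u v; left.
    have [P [hP hr]] := h; split; first by have := reachP_lab hP hr.
    have [om [c sp]] := robust_coupling h; exists (fun z => om (z.2, z.1)); split.
      exact: coupling_T.
    by move=> u v /sp hv; right.
- by apply: ct_incl => a b [/robust_Xr|/robust_Xr /Xr_sym].
- by apply: t_step; left.
Qed.

End Main.

Theorem proposition8 (R : realType) (S : finType) (L : Type)
  (tau : S -> S -> R) (ell : S -> L)
  (hLMC : is_LMC tau) (hlab : exists s t : S, ell s <> ell t)
  (Q : relS S) :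
  bisimulation tau ell Q ->
  rel_incl (robust tau ell) Q -> rel_incl Q (bisimilar tau ell) ->
  bisimulation tau ell (Refine tau ell Q) /\
  rel_incl (robust tau ell) (Refine tau ell Q) /\
  rel_incl (Refine tau ell Q) (bisimilar tau ell).
Proof.
move=> hQ hrQ _; split; first exact: part1.
split; first exact: part2.
by move=> s t [B [hB [_ hb]]]; exists B.
Qed.
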